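(* Let $\mu \vdash n$ with transpose $\mu'$. Define $\underline{d}_0 = 1$ and $\underline{d}_i = \underline{d}_{i-1} + (\mu'_i - 1)$ for $1 \leq i \leq \mu_1 - 1$. Then the Tanisaki ideal $\mathcal{I}_\mu$ is generated by the polynomials $\sigma \cdot g$ for $\sigma \in \mathfrak{S}_n$ and \[ g \in \{ e_{\underline{d}_1}(x_1, \ldots, x_{n-1}),\ e_{\underline{d}_2}(x_1, \ldots, x_{n-2}),\ \ldots,\ e_{\underline{d}_{\mu_1 - 1}}(x_1, \ldots, x_{n-\mu_1+1}),\ e_1(x_1, \ldots, x_n), \ldots, e_n(x_1, \ldots, x_n)\}. \]
   Context: $\mathfrak{S}_n$ acts on $\mathbb{Q}[x_1, \ldots, x_n]$ by $\sigma \cdot x_i = x_{\sigma(i)}$. For $S \subset [n]$, $e_r(S)$ is the elementary symmetric polynomial of degree $r$ in the variables $\{x_i : i \in S\}$. With $\mu'$ padded by zeros to have $n$ entries, let $d_k(\mu) = \mu'_n + \mu'_{n-1} + \cdots + \mu'_{n-k+1}$. The Tanisaki ideal is $\mathcal{I}_\mu = \langle e_r(S) : S \subset [n],\ |S| - d_{|S|}(\mu) < r \leq |S| \rangle \subset \mathbb{Q}[x_1, \ldots, x_n]$. *)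

(* Defs.v *)
From mathcomp Require Import all_boot all_order all_algebra all_fingroup.
From mathcomp Require Import mpoly.
Set Implicit Arguments. Unset Strict Implicit. Unset Printing Implicit Defensive.
Import GRing.Theory.
Local Open Scope ring_scope.

(* A partition mu of n: weakly decreasing sequence of positive parts summing to n.
   mu = [:: mu_1; mu_2; ...]  (1-based in the paper). *)
Definition is_partition (n : nat) (mu : seq nat) : Prop :=
  [/\ sorted geq mu, all (fun m => 0 < m)%N mu & sumn mu = n].

Definition part1 (mu : seq nat) : nat := head 0%N mu.

(* transpose: mu'_i = #{j | mu_j >= i}, for i >= 1 (automatically 0 for i > mu_1,
   i.e. padded by zeros) *)
Definition conj_part (mu : seq nat) (i : nat) : nat := count (fun m => i <= m)%N mu.

Definition dk (mu : seq nat) (n k : nat) : nat :=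
  (\sum_(n - k + 1 <= i < n + 1) conj_part mu i)%N.

(* underlined d: d_0 = 1, d_i = d_{i-1} + (mu'_i - 1)  (as integers, then as nat) *)
Fixpoint dl_int (mu : seq nat) (i : nat) : int :=
  match i with
  | 0 => 1
  | i'.+1 => dl_int mu i' + ((conj_part mu i'.+1)%:Z - 1)
  end.
Definition dl (mu : seq nat) (i : nat) : nat := `|dl_int mu i|%N.

Definition esymS (n : nat) (S : {set 'I_n}) (r : nat) : {mpoly rat[n]} :=
  \sum_(T : {set 'I_n} | (T \subset S) && (#|T| == r)) \prod_(i in T) 'X_i.

(* the set of variables x_1, ..., x_k (0-based indices < k) *)
Definition first_vars (n k : nat) : {set 'I_n} := [set i : 'I_n | (i < k)%N].

Definition in_ideal (n : nat) (G : {mpoly rat[n]} -> Prop) (p : {mpoly rat[n]}) : Prop :=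
  exists s : seq ({mpoly rat[n]} * {mpoly rat[n]}),
    (forall q, q \in s -> G q.2) /\ p = \sum_(q <- s) q.1 * q.2.

(* generators of the Tanisaki ideal: e_r(S), S ⊂ [n], |S| - d_{|S|}(mu) < r <= |S| *)
Definition tanisaki_gens (n : nat) (mu : seq nat) (p : {mpoly rat[n]}) : Prop :=
  exists (S : {set 'I_n}) (r : nat),
    (#|S| < r + dk mu n #|S|)%N /\ (r <= #|S|)%N /\ p = esymS S r.

Definition tanisaki (n : nat) (mu : seq nat) : {mpoly rat[n]} -> Prop :=
  in_ideal (tanisaki_gens mu).

Definition lemma_g (n : nat) (mu : seq nat) (g : {mpoly rat[n]}) : Prop :=
  (exists i : nat, [/\ (1 <= i)%N, (i <= part1 mu - 1)%N &
                     g = esymS (first_vars n (n - i)) (dl mu i)])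
  \/ (exists k : nat, [/\ (1 <= k)%N, (k <= n)%N & g = esymS [set: 'I_n] k]).

(* sigma . g, with sigma . x_i = x_{sigma(i)} (msym s maps 'X_i to 'X_(s i)) *)
Definition lemma_gens (n : nat) (mu : seq nat) (p : {mpoly rat[n]}) : Prop :=
  exists (s : 'S_n) (g : {mpoly rat[n]}), lemma_g mu g /\ p = msym s g.

(* Main.v *)
Require Import Defs.
From mathcomp Require Import all_boot all_order all_algebra all_fingroup.
From mathcomp Require Import mpoly zify.
Set Implicit Arguments. Unset Strict Implicit. Unset Printing Implicit Defensive.
Import GRing.Theory.
Local Open Scope ring_scope.

Lemma exists_perm_imset (T : finType) (A B : {set T}) :
  #|A| = #|B| -> exists s : {perm T}, s @: A = B.
Proof.
move=> AB.
pose sA := enum A ++ enum (~: A). pose sB := enum B ++ enum (~: B).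
have memA x : x \in sA by rewrite mem_cat !mem_enum in_setC; case: (x \in A).
have usA : uniq sA.
  rewrite cat_uniq !enum_uniq /= andbT; apply/hasPn => x; rewrite !mem_enum in_setC.
  by case: (x \in A).
have usB : uniq sB.
  rewrite cat_uniq !enum_uniq /= andbT; apply/hasPn => x; rewrite !mem_enum in_setC.
  by case: (x \in B).
have szAB : size sA = size sB.
  by rewrite !size_cat -!cardE !cardsC.
pose f x := nth x sB (index x sA).
have f_inj : injective f.
  move=> x y; rewrite /f.
  have ix : (index x sA < size sB)%N by rewrite -szAB index_mem.
  have iy : (index y sA < size sB)%N by rewrite -szAB index_mem.
  rewrite (set_nth_default y) // => /eqP; rewrite nth_uniq // => /eqP hi.
  by rewrite -(nth_index x (memA x)) hi nth_index.
exists (perm f_inj).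
apply/eqP; rewrite eqEcard card_imset; last exact: perm_inj.
rewrite AB leqnn andbT; apply/subsetP => _ /imsetP [x xA ->].
rewrite permE /f /sA index_cat mem_enum xA.
have ix : (index x (enum A) < size (enum B))%N by rewrite -cardE -AB cardE index_mem mem_enum.
by rewrite nth_cat ix -(mem_enum B); apply: mem_nth.
Qed.

Lemma msymXi n (s : 'S_n) (i : 'I_n) : msym s ('X_i : {mpoly rat[n]}) = 'X_(s i).
Proof.
rewrite msymX; congr mpolyX; apply/mnmP => j; rewrite !mnmE.
by rewrite -(inj_eq (@perm_inj _ s)) permKV eq_sym.
Qed.

Lemma msym_esymS n (s : 'S_n) (S : {set 'I_n}) r :
  msym s (esymS S r) = esymS (s @: S) r.
Proof.
rewrite /esymS rmorph_sum /=.
rewrite [RHS](reindex_inj (imset_inj (@perm_inj _ s))) /=.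
apply: eq_big => T.
  rewrite card_imset; last exact: perm_inj.
  congr andb; apply/subsetP/subsetP => H x.
    by move=> /imsetP [y yT ->]; rewrite imset_f // H.
  move=> xT; have /imsetP [y yS /perm_inj ->] : s x \in s @: S by rewrite H // imset_f.
  done.
move=> _; rewrite rmorph_prod big_imset /=; last by move=> x y _ _; apply: perm_inj.
by apply: eq_bigr => i _; rewrite msymXi.
Qed.

Lemma esymS_U1 n (S : {set 'I_n}) (j : 'I_n) r : j \notin S ->
  esymS (j |: S) r.+1 = esymS S r.+1 + 'X_j * esymS S r.
Proof.
move=> jS; rewrite /esymS.
rewrite [in LHS](bigID (fun T : {set 'I_n} => j \in T)) /= addrC; congr (_ + _).
  apply: eq_bigl => T; case jT: (j \in T) => /=; rewrite ?andbT ?andbF.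
    symmetry; apply/negbTE; rewrite negb_and; apply/orP; left; apply/subsetPn; exists j => //.
  have -> : (T \subset j |: S) = (T \subset S); last by [].
  apply/subsetP/subsetP => H x xT.
    by have := H x xT; rewrite in_setU1; case/orP => // /eqP ex; rewrite ex jT in xT.
  by rewrite in_setU1 H ?orbT.
rewrite big_distrr /= (reindex_onto (fun T => j |: T) (fun T => T :\ j)) /=; last first.
  by move=> T /andP [_ jT]; rewrite setD1K.
apply: eq_big => T.
  case jT: (j \in T).
    have -> : (T \subset S) = false by apply/negbTE/subsetPn; exists j.
    rewrite andFb; apply/negbTE; rewrite negb_and; apply/orP; right.
    by apply/eqP => e; move: jT; rewrite -e setD11.
  rewrite setU1K ?jT // eqxx setU11 !andbT cardsU1 jT add1n eqSS.
  have -> : (j |: T \subset j |: S) = (T \subset S); last by [].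
  apply/subsetP/subsetP => H x xT.
    have := H x; rewrite !in_setU1 xT orbT => /(_ isT); case/orP => // /eqP ex.
    by rewrite ex jT in xT.
  by move: xT; rewrite !in_setU1 => /orP [->|/H ->] //; rewrite orbT.
move=> /andP [_ /eqP e]; rewrite big_setU1 //.
by rewrite -e setD11.
Qed.

Section Ideal.
Variable (n : nat) (G : {mpoly rat[n]} -> Prop).

Lemma in_ideal_gen p : G p -> in_ideal G p.
Proof.
move=> Gp; exists [:: (1, p)]; split.
  by move=> q; rewrite inE => /eqP ->.
by rewrite big_seq1 /= mul1r.
Qed.

Lemma in_idealD p q : in_ideal G p -> in_ideal G q -> in_ideal G (p + q).
Proof.
move=> [s1 [H1 ->]] [s2 [H2 ->]]; exists (s1 ++ s2); split; last by rewrite big_cat.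
by move=> x; rewrite mem_cat => /orP [/H1|/H2].
Qed.

Lemma in_idealM c p : in_ideal G p -> in_ideal G (c * p).
Proof.
move=> [s [H ->]]; exists [seq (c * x.1, x.2) | x <- s]; split.
  by move=> x /mapP [y ys ->] /=; apply: H.
by rewrite big_map big_distrr; apply: eq_bigr => x _ /=; rewrite mulrA.
Qed.

Lemma in_idealB p q : in_ideal G p -> in_ideal G q -> in_ideal G (p - q).
Proof.
by move=> Hp Hq; rewrite -mulN1r; apply: in_idealD => //; apply: in_idealM.
Qed.
End Ideal.

Lemma in_ideal_trans n (G G' : {mpoly rat[n]} -> Prop) p :
  (forall q, G q -> in_ideal G' q) -> in_ideal G p -> in_ideal G' p.
Proof.
move=> HG [s [Hs ->]]; elim: s Hs => [|x s IH] Hs.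
  by rewrite big_nil; exists [::]; split; rewrite ?big_nil.
rewrite big_cons; apply: in_idealD; first by apply: in_idealM; apply: HG; apply: Hs; rewrite inE eqxx.
by apply: IH => q qs; apply: Hs; rewrite inE qs orbT.
Qed.

Lemma mem_le_part1 mu m : sorted geq mu -> m \in mu -> (m <= part1 mu)%N.
Proof.
case: mu => [|a l] //= Hs; rewrite inE => /orP [/eqP -> //|ml].
have := order_path_min _ Hs; move=> /(_ _) H.
have /allP : all (geq a) l by apply: H => x y z /= h1 h2; apply: leq_trans h2 h1.
by move=> /(_ m ml).
Qed.

Lemma conj_part0 mu i : sorted geq mu -> (part1 mu < i)%N -> conj_part mu i = 0%N.
Proof.
move=> Hs Hi; rewrite /conj_part (eq_in_count (a2 := pred0)) ?count_pred0 //.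
move=> m mmu /=; apply/negbTE; rewrite -ltnNge.
exact: leq_ltn_trans (mem_le_part1 Hs mmu) Hi.
Qed.

Lemma conj_part_pos mu i : (0 < i)%N -> (i <= part1 mu)%N -> (0 < conj_part mu i)%N.
Proof.
case: mu => [|a l] /= Hi; first by rewrite leqn0 => /eqP Hi0; rewrite Hi0 in Hi.
by rewrite /conj_part /= => ->.
Qed.

Lemma sum_le_a a N : (\sum_(1 <= i < N.+1) (i <= a)%N)%N = minn a N.
Proof.
elim: N => [|N IH]; first by rewrite big_geq // minn0.
rewrite big_nat_recr //= IH; lia.
Qed.

Lemma sum_conj_part mu N : all (fun m => m <= N)%N mu ->
  (\sum_(1 <= i < N.+1) conj_part mu i)%N = sumn mu.
Proof.
elim: mu => [|a l IH] /=.
  by move=> _; rewrite big1 // => i _; rewrite /conj_part.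
move=> /andP [aN Hl]; rewrite /conj_part /=.
rewrite big_split /= sum_le_a -IH //; congr addn; lia.
Qed.

Section Mu.
Variables (n : nat) (mu : seq nat).
Hypothesis hmu : is_partition n mu.

Lemma part1_le_n : (part1 mu <= n)%N.
Proof.
case: hmu => _ _ <-; case: mu => //= a l; exact: leq_addr.
Qed.

Lemma mem_le_sumn (l : seq nat) m : m \in l -> (m <= sumn l)%N.
Proof.
elim: l => [|a l IH] //=; rewrite inE => /orP [/eqP ->|/IH h]; first exact: leq_addr.
exact: leq_trans h (leq_addl _ _).
Qed.

Lemma dk_full : dk mu n n = n.
Proof.
rewrite /dk subnn add0n addn1; case: hmu => _ _ hs.
rewrite sum_conj_part // ; apply/allP => m mmu; rewrite -hs.
exact: mem_le_sumn.
Qed.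

Lemma dk_step k : (k < n)%N -> dk mu n (n - k) = (conj_part mu k.+1 + dk mu n (n - k.+1))%N.
Proof.
move=> kn; rewrite /dk subKn ?(ltnW kn) // subKn // !addn1 big_ltn //.
Qed.

Lemma dl_pos i : (i <= part1 mu)%N -> (1 <= dl_int mu i)%R.
Proof.
elim: i => [|i IH] //= hi.
have := conj_part_pos (ltn0Sn i) hi; have := IH (ltnW hi); lia.
Qed.

Lemma dlE i : (i <= part1 mu)%N -> (dl mu i)%:Z = dl_int mu i.
Proof.
move=> hi; rewrite /dl gez0_abs //; have := dl_pos hi; lia.
Qed.

Lemma dl_dk k : (k <= n)%N -> (dl_int mu k + (dk mu n (n - k))%:Z = (n - k + 1)%:Z)%R.
Proof.
elim: k => [|k IH] hk /=; first by rewrite subn0 dk_full; lia.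
have := IH (ltnW hk); rewrite dk_step //; lia.
Qed.

Lemma dk_zero k : (part1 mu <= k.+1)%N -> dk mu n (n - k.+1) = 0%N.
Proof.
move=> hk; rewrite /dk; case: (leqP k.+1 n) => hkn.
  rewrite subKn // big1_seq // => i /andP [_]; rewrite mem_index_iota => /andP [h1 _].
  case: hmu => hs _ _; apply: conj_part0 => //; lia.
by rewrite big_geq //; lia.
Qed.
End Mu.

Lemma card_first_vars n m : (m <= n)%N -> #|first_vars n m| = m.
Proof.
move=> mn.
have -> : first_vars n m = [set widen_ord mn i | i in 'I_m].
  apply/setP => x; rewrite inE; apply/idP/imsetP.
    by move=> xm; exists (Ordinal xm) => //; apply: val_inj.
  by move=> [y _ ->] /=.
rewrite card_imset ?card_ord //.
by move=> x y /(congr1 val) /= /val_inj.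
Qed.

Section Main.
Variables (n : nat) (mu : seq nat).
Hypothesis hmu : is_partition n mu.

Lemma claim k : (k <= n)%N -> forall S : {set 'I_n}, #|S| = (n - k)%N ->
  forall r, (n - k < r + dk mu n (n - k))%N -> (r <= n - k)%N ->
  in_ideal (lemma_gens mu) (esymS S r).
Proof.
elim: k => [|k IH] hk S hS r hr1 hr2.
  rewrite subn0 in hS hr1 hr2; rewrite dk_full // in hr1.
  have -> : S = [set: 'I_n].
    by apply/eqP; rewrite eqEcard subsetT cardsT card_ord hS leqnn.
  apply: in_ideal_gen; exists 1%g, (esymS [set: 'I_n] r); split; last by rewrite msym1m.
  by right; exists r; split => //; lia.
case: (leqP (part1 mu) k.+1) => hp.
  by rewrite dk_zero // in hr1; lia.
have hD := dl_dk hmu hk; rewrite -dlE // in hD; last exact: ltnW.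
have hc : (dl mu k.+1 + dk mu n (n - k.+1) = n - k)%N by lia.
have hstep := @dk_step n mu k hk.
have hc1 : (1 <= dl mu k.+1)%N.
  have h := dl_pos (ltnW hp); have e := dlE (ltnW hp); lia.
elim: r hr1 hr2 => [|r IHr] hr1 hr2; first by lia.
case: (ltnP (dl mu k.+1) r.+1) => hcr; last first.
  have hr : r.+1 = dl mu k.+1 by lia.
  have [s hs] : exists s : 'S_n, s @: first_vars n (n - k.+1) = S.
    by apply: exists_perm_imset; rewrite hS card_first_vars // leq_subr.
  apply: in_ideal_gen; exists s, (esymS (first_vars n (n - k.+1)) (dl mu k.+1)); split.
    by left; exists k.+1; split => //; lia.
  by rewrite msym_esymS hs hr.
have [j jS] : exists j, j \notin S.
  apply/existsP; rewrite -negb_forall; apply/negP => /forallP hall.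
  have : S = [set: 'I_n] by apply/setP => x; rewrite inE hall.
  by move=> eS; move: hS; rewrite eS cardsT card_ord; lia.
have -> : esymS S r.+1 = esymS (j |: S) r.+1 - 'X_j * esymS S r.
  by rewrite esymS_U1 // addrK.
apply: in_idealB; last by apply: in_idealM; apply: IHr; lia.
apply: IH; [lia | | lia | lia].
by rewrite cardsU1 jS hS; lia.
Qed.
End Main.

Unset Implicit Arguments.
Local Close Scope ring_scope.

Theorem lemma2p1 (n : nat) (mu : seq nat) :
  is_partition n mu ->
  forall p : {mpoly rat[n]}, tanisaki mu p <-> in_ideal (lemma_gens mu) p.
Proof.
move=> hmu p; split.
  apply: in_ideal_trans => q [S [r [h1 [h2 ->]]]].
  have hSn : (#|S| <= n)%N by rewrite -[X in (_ <= X)%N](card_ord n) max_card.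
  apply: (@claim n mu hmu (n - #|S|)); rewrite ?leq_subr ?subKn //.
apply: in_ideal_trans => q [s [g [hg ->]]]; apply: in_ideal_gen.
have hp1 := part1_le_n hmu.
case: hg => [[i [hi1 hi2 ->]]|[k [hk1 hk2 ->]]]; rewrite msym_esymS.
  have hin : (i < n)%N by lia.
  have hcard : #|s @: first_vars n (n - i)| = (n - i)%N.
    by rewrite card_imset ?card_first_vars ?leq_subr //; apply: perm_inj.
  have hD := dl_dk hmu (ltnW hin); rewrite -dlE in hD; last lia.
  have hstep := @dk_step n mu i hin.
  have hpos := @conj_part_pos mu i.+1 (ltn0Sn i) ltac:(lia).
  exists (s @: first_vars n (n - i)), (dl mu i); rewrite hcard; split; last split => //; lia.
have hcard : #|s @: [set: 'I_n]| = n.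
  by rewrite card_imset ?cardsT ?card_ord //; apply: perm_inj.
exists (s @: [set: 'I_n]), k; rewrite hcard dk_full //; split; last split => //; lia.
Qed.
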